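(* Let $M,N\ge 0$ be integers, $a_0,\dots,a_M\in\mathbb{R}$, $f_M(x)=\sum_{m=0}^M a_mT_m(x)$, and set $a_{M+1}=a_{M+2}=0$. For $0\le n\le N$ and $y\in[-1,1]$ let $\tilde R_n(y)=\int_{-1}^{y}f_M(y-1-t)T_n(t)\,\mathrm{d}t$, and let $R=(R_{k,n})$, $0\le k\le M+N+1$, $0\le n\le N$, be the matrix of Chebyshev coefficients defined by $\tilde R_n(y)=\sum_{k=0}^{M+N+1}R_{k,n}T_k(y)$. Then the zeroth column of $R$ is $$R_{k,0}=\begin{cases}0, & k>M+1,\\[1mm] \dfrac{a_{k-1}-a_{k+1}}{2k}, & 2\le k\le M+1,\\[2mm] a_0-\dfrac{a_2}{2}, & k=1,\\[2mm] \displaystyle\sum_{j=1}^{M+1}(-1)^{j+1}R_{j,0}, & k=0.\end{cases}$$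
   Context: $T_m(x)=\cos(m\arccos x)$ is the $m$-th Chebyshev polynomial. Each $\tilde R_n$ is a polynomial in $y$ of degree at most $M+n+1\le M+N+1$, so the coefficients $R_{k,n}$ are well defined, with $R_{k,n}=0$ for $k>M+n+1$. The matrix $R$ is called the (Chebyshev) convolution matrix of $f_M$. *)

(* Defs.v *)
From Stdlib Require Import Reals.
From Coquelicot Require Import Coquelicot.
Open Scope R_scope.

Definition chebT (m : nat) (x : R) : R := cos (INR m * acos x).

Definition fM (a : nat -> R) (M : nat) (x : R) : R :=
  sum_f_R0 (fun m => a m * chebT m x) M.

Definition aext (a : nat -> R) (M : nat) (m : nat) : R :=
  if Nat.leb m M then a m else 0.

Definition Rtilde (a : nat -> R) (M n : nat) (y : R) : R :=
  RInt (fun t => fM a M (y - 1 - t) * chebT n t) (-1) y.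

Definition Rcol0_pos (a : nat -> R) (M k : nat) : R :=
  if Nat.ltb (S M) k then 0
  else if Nat.eqb k 1 then a 0%nat - aext a M 2%nat / 2
  else (aext a M (k - 1)%nat - aext a M (k + 1)%nat) / (2 * INR k).

Definition Rcol0 (a : nat -> R) (M k : nat) : R :=
  match k with
  | O => sum_f_R0 (fun i => (-1) ^ (i + 2)%nat * Rcol0_pos a M (S i)) M
         (* = sum_{j=1}^{M+1} (-1)^{j+1} R_{j,0}, with j = i+1 *)
  | S _ => Rcol0_pos a M k
  end.

(* Main.v *)
Require Import Defs.
From Stdlib Require Import Reals Lra Lia.
From Coquelicot Require Import Coquelicot.
Open Scope R_scope.

Fixpoint Tp (n : nat) (x : R) : R :=
  match n with O => 1 | S m => match m with O => x | S p => 2 * x * Tp m x - Tp p x end end.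
Fixpoint Uq (n : nat) (x : R) : R :=
  match n with O => 0 | S m => match m with O => 1 | S p => 2 * x * Uq m x - Uq p x end end.

Lemma Tp_SS n x : Tp (S (S n)) x = 2 * x * Tp (S n) x - Tp n x.
Proof. reflexivity. Qed.
Lemma Uq_SS n x : Uq (S (S n)) x = 2 * x * Uq (S n) x - Uq n x.
Proof. reflexivity. Qed.

Lemma pair_ind (P : nat -> Prop) : P 0%nat -> P 1%nat ->
  (forall n, P n -> P (S n) -> P (S (S n))) -> forall n, P n.
Proof.
  intros H0 H1 HS n. assert (P n /\ P (S n)) as [H _]; [|exact H].
  induction n as [|n [IH1 IH2]]; auto.
Qed.

Lemma L1 x n : Tp (S n) x = x * Uq (S n) x - Uq n x.
Proof.
  revert n; apply pair_ind; [simpl; ring | simpl; ring |].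
  intros n H1 H2. rewrite Tp_SS, H2, H1, !Uq_SS. ring.
Qed.

Lemma L2 x n : Uq (S (S n)) x - Uq n x = 2 * Tp (S n) x.
Proof.
  revert n; apply pair_ind; [simpl; ring | simpl; ring |].
  intros n H1 H2. rewrite Tp_SS.
  replace (2*(2*x*Tp (S(S n)) x - Tp (S n) x)) with (2*x*(2*Tp(S(S n)) x) - 2*Tp(S n) x) by ring.
  rewrite <- H1, <- H2, !Uq_SS. ring.
Qed.

Lemma Tp_m1 n : Tp n (-1) = (-1) ^ n.
Proof.
  revert n; apply pair_ind; [simpl; ring | simpl; ring |].
  intros n H1 H2. rewrite Tp_SS, H1, H2. simpl. ring.
Qed.

Lemma chebT_Tp n x : -1 <= x <= 1 -> chebT n x = Tp n x.
Proof.
  intros Hx. unfold chebT. set (t := acos x).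
  assert (Ht : cos t = x) by (apply cos_acos; lra).
  revert n; apply pair_ind.
  - simpl. rewrite Rmult_0_l. apply cos_0.
  - simpl. rewrite Rmult_1_l. exact Ht.
  - intros n H1 H2. rewrite Tp_SS, <- H1, <- H2, !S_INR.
    replace ((INR n + 1 + 1) * t) with ((INR n + 1) * t + t) by ring.
    replace (INR n * t) with ((INR n + 1) * t - t) by ring.
    rewrite cos_plus, cos_minus, Ht. ring.
Qed.

Lemma Tp_deriv n x : is_derive (Tp n) x (INR n * Uq n x).
Proof.
  revert n; apply pair_ind.
  - simpl. apply (is_derive_ext (fun _ => 1)); [reflexivity|].
    auto_derive; [exact I| ring].
  - simpl. apply (is_derive_ext (fun t => t)); [reflexivity|].
    auto_derive; [exact I| ring].
  - intros n H1 H2.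
    apply (is_derive_ext (fun t => 2 * t * Tp (S n) t - Tp n t)); [intro; reflexivity|].
    Opaque Tp. auto_derive. Transparent Tp.
    + split; [exists (INR (S n) * Uq (S n) x); exact H2 | split; [|exact I]].
      exists (INR n * Uq n x); exact H1.
    + replace (Derive (fun x0 : R => Tp n x0) x) with (INR n * Uq n x) by (symmetry; apply is_derive_unique; exact H1).
      replace (Derive (fun x0 : R => Tp (S n) x0) x) with (INR (S n) * Uq (S n) x) by (symmetry; apply is_derive_unique; exact H2).
      rewrite L1, !Uq_SS, !S_INR. ring.
Qed.

Definition Gs (c : nat -> R) (K : nat) (y : R) := sum_f_R0 (fun k => c k * Tp k y) K.

Lemma Gs_deriv c K y : is_derive (Gs c K) y (sum_f_R0 (fun k => c k * (INR k * Uq k y)) K).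
Proof.
  induction K as [|K IH].
  - apply (is_derive_ext (fun t => c 0%nat * Tp 0 t)); [reflexivity|].
    simpl. auto_derive; [exact I|]. rewrite !Rmult_0_l, Rmult_0_r. reflexivity.
  - apply (is_derive_ext (fun t => Gs c K t + c (S K) * Tp (S K) t)); [reflexivity|].
    Opaque Tp Gs. auto_derive. Transparent Tp Gs.
    + split; [exists (sum_f_R0 (fun k => c k * (INR k * Uq k y)) K); exact IH|split; [|exact I]].
      exists (INR (S K) * Uq (S K) y); apply Tp_deriv.
    + replace (Derive (fun x0 : R => Gs c K x0) y) with (sum_f_R0 (fun k => c k * (INR k * Uq k y)) K)
        by (symmetry; apply is_derive_unique; exact IH).
      replace (Derive (fun x0 : R => Tp (S K) x0) y) with (INR (S K) * Uq (S K) y)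
        by (symmetry; apply is_derive_unique; apply Tp_deriv).
      change (sum_f_R0 ?f (S K)) with (sum_f_R0 f K + f (S K)). rewrite !Rmult_1_l. reflexivity.
Qed.

Definition r (b : nat -> R) (k : nat) : R :=
  if Nat.eqb k 1 then b 0%nat - b 2%nat / 2 else (b (k - 1)%nat - b (k + 1)%nat) / (2 * INR k).

Lemma tele b x n : sum_f_R0 (fun i => r b (S i) * (INR (S i) * Uq (S i) x)) n
  = Gs b n x - (b (S n) * Uq n x + b (S (S n)) * Uq (S n) x) / 2.
Proof.
  induction n as [|n IH].
  - simpl. unfold r, Gs. simpl. field.
  - rewrite tech5, IH. unfold Gs. rewrite tech5.
    unfold r. simpl Nat.eqb. cbv iota.
    replace (S (S n) - 1)%nat with (S n) by lia.
    replace (S (S n) + 1)%nat with (S (S (S n))) by lia.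
    assert (Hn : INR (S (S n)) <> 0) by (apply not_0_INR; lia).
    assert (HL := L2 x n).
    replace (Tp (S n) x) with ((Uq (S (S n)) x - Uq n x) / 2) by (rewrite HL; field).
    field. exact Hn.
Qed.

Lemma sum_shift f n : sum_f_R0 f (S n) = f 0%nat + sum_f_R0 (fun i => f (S i)) n.
Proof.
  induction n as [|n IH]; simpl; [ring|]. simpl in IH. rewrite IH. ring.
Qed.

Lemma sum_tail g M N : (forall i, (M < i)%nat -> g i = 0) -> sum_f_R0 g (M + N) = sum_f_R0 g M.
Proof.
  intros H. induction N as [|N IH]; [now rewrite Nat.add_0_r|].
  rewrite Nat.add_succ_r. simpl. rewrite IH, H by lia. ring.
Qed.

Lemma Rcol0_pos_r a M k : (1 <= k)%nat -> Rcol0_pos a M k = r (aext a M) k.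
Proof.
  intros Hk. unfold Rcol0_pos, r, aext.
  destruct (Nat.ltb_spec (S M) k).
  - assert (k <> 1)%nat by lia. rewrite (proj2 (Nat.eqb_neq _ _) H0).
    rewrite (proj2 (Nat.leb_gt _ _)) by lia. rewrite (proj2 (Nat.leb_gt _ _)) by lia.
    unfold Rdiv. ring.
  - destruct (Nat.eqb_spec k 1); [|reflexivity].
    subst. simpl. reflexivity.
Qed.

Lemma sum_zero n : sum_f_R0 (fun _ => 0) n = 0.
Proof. induction n; simpl; [ring|rewrite IHn; ring]. Qed.

Theorem theorem3p2 (M N : nat) (a : nat -> R) :
  forall y : R, -1 <= y <= 1 ->
    Rtilde a M 0 y = sum_f_R0 (fun k => Rcol0 a M k * chebT k y) (M + N + 1)%nat.
Proof.
  intros y Hy.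
  set (K := (M + N + 1)%nat).
  set (b := aext a M). set (c := Rcol0 a M).
  assert (HR : sum_f_R0 (fun k => c k * chebT k y) K = Gs c K y).
  { apply sum_eq; intros; rewrite chebT_Tp by lra; reflexivity. }
  rewrite HR.
  assert (Hf : forall s, -1 <= s <= 1 -> fM a M s = Gs b (M + N) s).
  { intros s Hs. unfold fM, Gs. rewrite sum_tail.
    - apply sum_eq; intros i Hi. unfold b, aext.
      rewrite (proj2 (Nat.leb_le _ _) Hi), chebT_Tp by lra; reflexivity.
    - intros i Hi. unfold b, aext. rewrite (proj2 (Nat.leb_gt _ _) Hi). ring. }
  assert (HKS : K = S (M + N)) by (unfold K; lia).
  assert (HD : forall s, sum_f_R0 (fun k => c k * (INR k * Uq k s)) K = Gs b (M + N) s).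
  { intros s. rewrite HKS, sum_shift.
    rewrite (sum_eq _ (fun i => r b (S i) * (INR (S i) * Uq (S i) s))).
    - rewrite tele. unfold b, aext.
      rewrite (proj2 (Nat.leb_gt _ _)) by lia. rewrite (proj2 (Nat.leb_gt _ _)) by lia.
      simpl INR. field.
    - intros i Hi. unfold c. simpl Rcol0. rewrite Rcol0_pos_r by lia. reflexivity. }
  assert (G0 : Gs c K (-1) = 0).
  { unfold Gs. rewrite HKS, sum_shift, sum_tail.
    - change (c 0%nat) with (sum_f_R0 (fun i => (-1) ^ (i + 2)%nat * Rcol0_pos a M (S i)) M).
      change (Tp 0 (-1)) with 1. rewrite Rmult_1_r, <- sum_plus.
      rewrite (sum_eq _ (fun _ => 0)); [apply sum_zero|].
      intros i Hi. cbv beta. rewrite Tp_m1. unfold c. change (Rcol0 a M (S i)) with (Rcol0_pos a M (S i)).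
      replace (i + 2)%nat with (S (S i)) by lia. simpl pow. ring.
    - intros i Hi. unfold c. change (Rcol0 a M (S i)) with (Rcol0_pos a M (S i)). unfold Rcol0_pos.
      rewrite (proj2 (Nat.ltb_lt _ _)) by lia. ring. }
  unfold Rtilde.
  rewrite (RInt_ext _ (fun t => Gs b (M + N) (y - 1 - t))).
  2: { intros t Ht. rewrite Rmin_left, Rmax_right in Ht by lra.
       rewrite Hf by lra. unfold chebT. simpl INR. rewrite Rmult_0_l, cos_0, Rmult_1_r.
       reflexivity. }
  assert (HI : is_RInt (fun t => Gs b (M + N) (y - 1 - t)) (-1) y
     (minus ((fun t => - Gs c K (y - 1 - t)) y) ((fun t => - Gs c K (y - 1 - t)) (-1)))).
  { apply (is_RInt_derive (fun t => - Gs c K (y - 1 - t)) (fun t => Gs b (M + N) (y - 1 - t))).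
    - intros t Ht. rewrite <- HD.
      Opaque Gs. auto_derive. Transparent Gs.
      + exists (sum_f_R0 (fun k => c k * (INR k * Uq k (y - 1 - t))) K). apply Gs_deriv.
      + replace (y - 1 + - t) with (y - 1 - t) by ring.
        replace (Derive (fun x0 : R => Gs c K x0) (y - 1 - t))
          with (sum_f_R0 (fun k => c k * (INR k * Uq k (y - 1 - t))) K)
          by (symmetry; apply is_derive_unique; apply Gs_deriv).
        ring.
    - intros t Ht. apply (ex_derive_continuous (K:=R_AbsRing) (V:=R_NormedModule) (fun t0 => Gs b (M + N) (y - 1 - t0))).
      Opaque Gs. auto_derive. Transparent Gs.
      exists (sum_f_R0 (fun k => b k * (INR k * Uq k (y - 1 - t))) (M + N)). apply Gs_deriv. }
  rewrite (is_RInt_unique _ _ _ _ HI).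
  unfold minus, plus, opp; simpl.
  replace (y - 1 - y) with (-1) by ring. replace (y - 1 - -1) with y by ring.
  rewrite G0. ring.
Qed.
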